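(* Let $R$ be a right semiartinian ring that is not completely reducible, and let $M$ be a finitely generated weakly $R$-projective right $R$-module. Then $M$ is projective.
   Context: All modules are right $R$-modules. For a right semiartinian ring $R$, the right socle sequence $(S_\alpha \mid \alpha \leq \sigma+1)$ is defined by $S_0 = 0$, $S_{\alpha+1}/S_\alpha = \mathrm{Soc}(R/S_\alpha)$, $S_\alpha = \bigcup_{\beta<\alpha} S_\beta$ for limit $\alpha$, with $\sigma+1$ the least ordinal such that $S_{\sigma+1} = R$ (the Loewy length); it is assumed that $\sigma > 0$ (i.e. $R$ is not completely reducible). For $\alpha \leq \sigma$, the $\alpha$th layer is $L_\alpha = S_{\alpha+1}/S_\alpha$ and the $\alpha$th layer epimorphism is the canonical projection $\pi_\alpha : S_{\alpha+1} \to L_\alpha$. A module $M$ is weakly $R$-projective if for each $0 < \alpha \leq \sigma$, each $f \in \mathrm{Hom}_R(M, L_\alpha)$ with finitely generated image factors through $\pi_\alpha$, i.e. $f = \pi_\alpha g$ for some $g \in \mathrm{Hom}_R(M, S_{\alpha+1})$. *)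

(* Defs.v *)
(* Right R-modules are modelled as left modules over the
   converse ring R^c (so  m *: x  with m : R^c is the right action x . m). *)
From HB Require Import structures.
From mathcomp Require Import all_boot all_algebra.
Set Implicit Arguments. Unset Strict Implicit. Unset Printing Implicit Defensive.
Import GRing.Theory.
Local Open Scope ring_scope.

Section SocleSequence.
Variable R : pzRingType.

Definition subR (A B : R -> Prop) : Prop := forall x, A x -> B x.

Definition right_ideal (I : R -> Prop) : Prop :=
  [/\ I 0, (forall x y, I x -> I y -> I (x - y)) & (forall x r, I x -> I (x * r))].

Definition zero_ideal : R -> Prop := fun x => x = 0.

(* T/S is a simple submodule of R/S : T is a right ideal strictly above S
   with no right ideal strictly between S and T. *)
Definition simple_over (S T : R -> Prop) : Prop :=
  [/\ right_ideal T, subR S T, (exists x, T x /\ ~ S x) &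
      forall U, right_ideal U -> subR S U -> subR U T -> subR U S \/ subR T U].

(* The right ideal S' with S'/S = Soc(R/S): the preimage of the sum of all
   simple submodules of R/S, i.e. the least right ideal containing S and
   every T with T/S simple. *)
Definition socle_succ (S : R -> Prop) : R -> Prop :=
  fun x => forall U, right_ideal U -> subR S U ->
    (forall T, simple_over S T -> subR T U) -> U x.

(* The members of the right socle sequence (S_alpha): the least family
   containing S_0 = 0, closed under S |-> socle_succ S and under unions of
   nonempty subfamilies (which gives S_alpha = U_{beta<alpha} S_beta at limits). *)
Inductive socle_stage : (R -> Prop) -> Prop :=
| stage0 : socle_stage zero_ideal
| stageS S : socle_stage S -> socle_stage (socle_succ S)
| stageU (F : (R -> Prop) -> Prop) :
    (exists S, F S) -> (forall S, F S -> socle_stage S) ->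
    socle_stage (fun x => exists2 S, F S & S x).

Definition right_semiartinian : Prop :=
  exists2 S, socle_stage S & forall x, S x.

Definition completely_reducible : Prop := forall x, socle_succ zero_ideal x.

Definition fin_gen (M : lmodType R^c) : Prop :=
  exists n (v : 'I_n -> M), forall m : M,
    exists c : 'I_n -> R^c, m = \sum_(i < n) c i *: v i.

Definition fg_image (M L : lmodType R^c) (f : {linear M -> L}) : Prop :=
  exists n (v : 'I_n -> M), forall m : M,
    exists c : 'I_n -> R^c, f m = \sum_(i < n) c i *: f (v i).

Definition projective (M : lmodType R^c) : Prop :=
  forall (N N' : lmodType R^c) (h : {linear N -> N'}),
    (forall y, exists x, h x = y) ->
    forall f : {linear M -> N'}, exists g : {linear M -> N}, forall m, h (g m) = f m.

(* For 0 < alpha <= sigma (i.e. S = S_alpha is a stage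
   different from 0 and from R), S_{alpha+1} = socle_succ S is represented by
   any module P with an injective homomorphism iota : P -> R_R with image
   S_{alpha+1}, and L_alpha with pi_alpha by any epimorphism pi : P -> L whose
   kernel is S_alpha (all such presentations are canonically isomorphic). *)
Definition weakly_projective (M : lmodType R^c) : Prop :=
  forall S, socle_stage S -> (exists x, S x /\ x != 0) -> (exists x, ~ S x) ->
  forall (P : lmodType R^c) (iota : {linear P -> (R^c)^o}),
    injective iota -> (forall y, socle_succ S y <-> exists p, iota p = y) ->
  forall (L : lmodType R^c) (pi : {linear P -> L}),
    (forall l, exists p, pi p = l) -> (forall p, pi p = 0 <-> S (iota p)) ->
  forall f : {linear M -> L}, fg_image f ->
    exists g : {linear M -> P}, forall m, pi (g m) = f m.

End SocleSequence.

(* Main.v *)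
Require Import Defs.
From HB Require Import structures.
From mathcomp Require Import all_boot all_algebra.
From mathcomp Require Import boolp.
From Stdlib Require List.
Set Implicit Arguments. Unset Strict Implicit. Unset Printing Implicit Defensive.
Import GRing.Theory.
Local Open Scope ring_scope.
Section SubQuot.
Variables (K : pzRingType) (V : lmodType K) (W : V -> Prop).
Hypotheses (W0 : W 0) (WB : forall x y, W x -> W y -> W (x - y))
  (WZ : forall a x, W x -> W (a *: x)).

Definition Wb : {pred V} := fun x => `[< W x >].
Lemma Wb_closed : submod_closed Wb.
Proof.
split; first by apply/asboolP.
move=> a u v /asboolP Hu /asboolP Hv; apply/asboolP.
have -> : a *: u + v = a *: u - (0 - v) by rewrite sub0r opprK.
by apply: WB; [apply: WZ | apply: WB].
Qed.
HB.instance Definition _ := GRing.isSubmodClosed.Build K V Wb Wb_closed.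
Record subW := SubW { subval : V; subvalP : Wb subval }.
HB.instance Definition _ := [isSub for subval].
HB.instance Definition _ := [Choice of subW by <:].
HB.instance Definition _ := [SubChoice_isSubLmodule of subW by <:].

Lemma sub_exists : exists (P : lmodType K) (iota : {linear P -> V}),
  injective iota /\ forall y, W y <-> exists p, iota p = y.
Proof.
exists subW; exists (GRing.Linear.clone _ _ _ _ (val : subW -> V) _).
split; first exact: val_inj.
move=> y; split.
  by move=> Wy; exists (SubW (asboolT Wy)).
by case=> [[v Hv]] <-; apply/asboolP.
Qed.
End SubQuot.

Local Open Scope quotient_scope.
Section Quot.
Variables (K : pzRingType) (V : lmodType K) (W : V -> Prop).
Hypotheses (W0 : W 0) (WB : forall x y, W x -> W y -> W (x - y))
  (WZ : forall a x, W x -> W (a *: x)).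

Lemma WN x : W x -> W (- x).
Proof. by move=> Wx; rewrite -sub0r; apply: WB. Qed.
Lemma WD x y : W x -> W y -> W (x + y).
Proof. by move=> Wx Wy; rewrite -[y]opprK; apply: WB => //; apply: WN. Qed.

Definition eqv (x y : V) := W (x - y).
Lemma eqv_refl x : eqv x x. Proof. by rewrite /eqv subrr. Qed.
Lemma eqv_sym x y : eqv x y -> eqv y x.
Proof. by rewrite /eqv => /WN; rewrite opprB. Qed.
Lemma eqv_trans x y z : eqv x y -> eqv y z -> eqv x z.
Proof.
by rewrite /eqv => H1 H2; have := WD H1 H2; rewrite addrA subrK.
Qed.
Lemma eqvD x x' y y' : eqv x x' -> eqv y y' -> eqv (x + y) (x' + y').
Proof. by rewrite /eqv opprD addrACA; apply: WD. Qed.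
Lemma eqvN x x' : eqv x x' -> eqv (- x) (- x').
Proof. by rewrite /eqv -opprD => /WN. Qed.
Lemma eqvZ a x x' : eqv x x' -> eqv (a *: x) (a *: x').
Proof. by rewrite /eqv -scalerBr => /(WZ a). Qed.

Definition eqvb : rel V := fun x y => `[< eqv x y >].
Lemma eqvb_refl : reflexive eqvb.
Proof. by move=> x; apply/asboolP/eqv_refl. Qed.
Lemma eqvb_sym : symmetric eqvb.
Proof.
by move=> x y; apply/asboolP/asboolP; apply: eqv_sym.
Qed.
Lemma eqvb_trans : transitive eqvb.
Proof.
by move=> y x z /asboolP H1 /asboolP H2; apply/asboolP; apply: eqv_trans H2.
Qed.
Canonical eqvb_equiv := EquivRel eqvb eqvb_refl eqvb_sym eqvb_trans.

Definition Q := {eq_quot eqvb}.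
HB.instance Definition _ := Choice.on Q.

Definition qpi (x : V) : Q := \pi_Q x.
Lemma qpi_eqv x y : eqv x y -> qpi x = qpi y.
Proof. by move=> H; apply/eqquotP; apply/asboolP. Qed.
Lemma qpi_eqvE x y : qpi x = qpi y -> eqv x y.
Proof. by move/eqquotP/asboolP. Qed.
Lemma eqv_rep x : eqv (repr (qpi x)) x.
Proof. apply: qpi_eqvE; by rewrite /qpi reprK. Qed.
Lemma qpi_rep (a : Q) : qpi (repr a) = a.
Proof. exact: reprK. Qed.

Definition qzero : Q := qpi 0.
Definition qadd (a b : Q) : Q := qpi (repr a + repr b).
Definition qopp (a : Q) : Q := qpi (- repr a).
Definition qscale (k : K) (a : Q) : Q := qpi (k *: repr a).

Lemma qaddA : associative qadd.
Proof.
move=> a b c; apply: qpi_eqv.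
apply: (eqv_trans (y := repr a + (repr b + repr c))).
  by apply: eqvD; [apply: eqv_refl | apply: eqv_rep].
rewrite addrA; apply: eqvD; [apply: eqv_sym; apply: eqv_rep | apply: eqv_refl].
Qed.
Lemma qaddC : commutative qadd.
Proof. by move=> a b; rewrite /qadd addrC. Qed.
Lemma qadd0 : left_id qzero qadd.
Proof.
move=> a; rewrite -[RHS]qpi_rep; apply: qpi_eqv.
rewrite -[X in eqv _ X]add0r; apply: eqvD; [apply: eqv_rep | apply: eqv_refl].
Qed.
Lemma qaddN : left_inverse qzero qopp qadd.
Proof.
move=> a; apply: qpi_eqv.
rewrite -(addNr (repr a)); apply: eqvD; [apply: eqv_rep | apply: eqv_refl].
Qed.
HB.instance Definition _ := GRing.isZmodule.Build Q qaddA qaddC qadd0 qaddN.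

Lemma qpiD x y : qpi (x + y) = qpi x + qpi y.
Proof.
apply: qpi_eqv; apply: eqv_sym; apply: eqvD; apply: eqv_rep.
Qed.
Lemma qpiN x : qpi (- x) = - qpi x.
Proof. apply: qpi_eqv; apply: eqv_sym; apply: eqvN; apply: eqv_rep. Qed.

Lemma qscaleA a b v : qscale a (qscale b v) = qscale (a * b) v.
Proof.
apply: qpi_eqv; rewrite -scalerA; apply: eqvZ; apply: eqv_rep.
Qed.
Lemma qscale1 : left_id 1 qscale.
Proof. by move=> a; rewrite /qscale scale1r qpi_rep. Qed.
Lemma qscaleDr : right_distributive qscale +%R.
Proof.
move=> k a b; rewrite /qscale -qpiD; apply: qpi_eqv.
rewrite -scalerDr; apply: eqvZ; apply: eqv_rep.
Qed.
Lemma qscaleDl v : {morph qscale^~ v: a b / a + b}.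
Proof. by move=> a b; rewrite /qscale -qpiD scalerDl. Qed.
HB.instance Definition _ := GRing.Zmodule_isLmodule.Build K Q qscaleA qscale1 qscaleDr qscaleDl.

Lemma qpi_linear : linear qpi.
Proof.
move=> k x y; rewrite qpiD; congr (_ + _).
apply: qpi_eqv; apply: eqv_sym; apply: eqvZ; apply: eqv_rep.
Qed.

Lemma quot_exists : exists (L : lmodType K) (pi : {linear V -> L}),
  (forall l, exists p, pi p = l) /\ (forall p, pi p = 0 <-> W p).
Proof.
pose piL : {linear V -> Q} := HB.pack qpi (GRing.isLinear.Build _ _ _ _ qpi qpi_linear).
exists Q; exists piL; split.
  by move=> l; exists (repr l); apply: qpi_rep.
move=> p; split.
  by move/qpi_eqvE; rewrite /eqv subr0.
by move=> Wp; apply: qpi_eqv; rewrite /eqv subr0.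
Qed.
End Quot.
Local Close Scope quotient_scope.

Section Tower.
Variable R : pzRingType.
Local Notation g := (@socle_succ R).
Local Notation stage := (@socle_stage R).

Lemma g_infl S : subR S (g S).
Proof. by move=> x Sx U _ SU _; apply: SU. Qed.

Lemma g_ext S1 S2 : subR S1 S2 -> subR S2 S1 -> subR (g S1) (g S2).
Proof.
move=> H1 H2; have -> : S1 = S2.
  by apply: funext => x; apply: propext; split; [apply: H1 | apply: H2].
by [].
Qed.

Lemma stage0P S : stage S -> S 0.
Proof.
elim=> [|S' _ IH|F [S0 FS0] _ IH]; first by [].
  by apply: g_infl.
by exists S0 => //; apply: IH.
Qed.

Definition strict (B A : R -> Prop) := subR B A /\ exists x, A x /\ ~ B x.
Definition extreme A := forall B, stage B -> strict B A -> subR (g B) A.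

Lemma lemma1 A : stage A -> extreme A ->
  forall B, stage B -> subR B A \/ subR (g A) B.
Proof.
move=> sA eA B; elim=> [|B0 sB0 IH|F neF sF IH].
- by left => x ->; apply: stage0P.
- case: IH => [B0A|gAB0]; last by right => x /gAB0; apply: g_infl.
  case: (pselect (exists x, A x /\ ~ B0 x)) => [ex|nex].
    by left; apply: eA => //; split.
  right; apply: g_ext => // x Ax; apply: contrapT => nB0x; apply: nex.
  by exists x.
- case: (pselect (exists C, F C /\ subR (g A) C)) => [[C [FC gAC]]|nex].
    by right => x /gAC Cx; exists C.
  left => x [C FC Cx]; case: (IH C FC) => [CA|gAC]; first by apply: CA.
  by exfalso; apply: nex; exists C.
Qed.

Lemma all_extreme A : stage A -> extreme A.
Proof.
elim=> [|A0 sA0 IH|F neF sF IH].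
- move=> B sB [BA [x [x0 nBx]]]; exfalso; apply: nBx; rewrite x0.
  exact: stage0P.
- move=> B sB [BgA [x [gAx nBx]]].
  case: (lemma1 sA0 IH sB) => [BA0|gA0B]; last first.
    by exfalso; apply: nBx; apply: gA0B.
  case: (pselect (exists y, A0 y /\ ~ B y)) => [ex|nex].
    by move=> y /(IH B sB (conj BA0 ex)); apply: g_infl.
  apply: g_ext => // y A0y; apply: contrapT => nBy; apply: nex; by exists y.
- move=> B sB [BA [x [[C' FC' C'x] nBx]]].
  case: (pselect (exists C, F C /\ subR B C)) => [[C [FC BC]]|nex]; last first.
    exfalso; apply: nBx.
    case: (lemma1 (sF C' FC') (IH C' FC') sB) => [BC'|gC'B].
      by exfalso; apply: nex; exists C'.
    by apply: gC'B; apply: g_infl.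
  case: (pselect (exists y, C y /\ ~ B y)) => [ex|nex2].
    by move=> y /(IH C FC B sB (conj BC ex)) Cy; exists C.
  have CB : subR C B by move=> y Cy; apply: contrapT => nBy; apply: nex2; exists y.
  case: (lemma1 (sF C FC) (IH C FC) (sF C' FC')) => [C'C|gCC'].
    by exfalso; apply: nBx; apply: CB; apply: C'C.
  move=> y /(g_ext BC CB) /gCC' C'y; by exists C'.
Qed.

Lemma chain A B : stage A -> stage B -> subR A B \/ subR B A.
Proof.
move=> sA sB; case: (lemma1 sA (all_extreme sA) sB) => H; [by right | left].
by move=> x /g_infl /H.
Qed.

Lemma g_ideal S : right_ideal (g S).
Proof.
split.
- by move=> U [U0 _ _] _ _.
- by move=> x y Hx Hy U UI SU TU; case: (UI) => _ UB _; apply: UB; [apply: Hx|apply: Hy].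
- by move=> x r Hx U UI SU TU; case: (UI) => _ _ UM; apply: UM; apply: Hx.
Qed.

Lemma stage_ideal S : stage S -> right_ideal S.
Proof.
elim=> [|S0 _ _|F [S0 FS0] sF IH].
- split; first by [].
    by move=> x y -> ->; rewrite subrr.
  by move=> x r ->; rewrite mul0r.
- exact: g_ideal.
- split.
  + by exists S0 => //; case: (IH S0 FS0).
  + move=> x y [C1 F1 C1x] [C2 F2 C2y].
    case: (chain (sF C1 F1) (sF C2 F2)) => H.
      by exists C2 => //; case: (IH C2 F2) => _ HB _; apply: HB => //; apply: H.
    by exists C1 => //; case: (IH C1 F1) => _ HB _; apply: HB => //; apply: H.
  + move=> x r [C FC Cx]; exists C => //.
    by case: (IH C FC) => _ _ HM; apply: HM.
Qed.

Lemma simple_sub_g S T : simple_over S T -> subR T (g S).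
Proof. by move=> sT x Tx U _ _ HU; apply: (HU T sT). Qed.

End Tower.

Section SumS.
Variables (R : pzRingType) (S : R -> Prop).
Hypothesis SI : right_ideal S.

Definition okl (l : seq ((R -> Prop) * R)) :=
  forall pr, List.In pr l -> simple_over S pr.1 /\ pr.1 pr.2.
Definition sumS (x : R) := exists l, okl l /\ S (x - \sum_(pr <- l) pr.2).

Lemma ideal0 (I : R -> Prop) : right_ideal I -> I 0. Proof. by case. Qed.
Lemma idealN (I : R -> Prop) x : right_ideal I -> I x -> I (- x).
Proof. by case=> I0 IB _ Ix; rewrite -sub0r; apply: IB. Qed.
Lemma idealB (I : R -> Prop) x y : right_ideal I -> I x -> I y -> I (x - y).
Proof. by case=> _ IB _; apply: IB. Qed.
Lemma idealD (I : R -> Prop) x y : right_ideal I -> I x -> I y -> I (x + y).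
Proof. by move=> HI Ix Iy; rewrite -[y]opprK; apply: idealB => //; apply: idealN. Qed.
Lemma idealM (I : R -> Prop) x r : right_ideal I -> I x -> I (x * r).
Proof. by case=> _ _ IM; apply: IM. Qed.

Lemma sumS_ideal : right_ideal sumS.
Proof.
split.
- by exists [::]; split => //; rewrite big_nil subr0; apply: ideal0.
- move=> x y [l1 [ok1 H1]] [l2 [ok2 H2]].
  exists (l1 ++ map (fun pr => (pr.1, - pr.2)) l2); split.
    move=> pr Hin; case: (List.in_app_or _ _ _ Hin) => [/ok1 //|].
    move/(List.in_map_iff _ _ _) => [q [<- /ok2 [sq tq]]].
    by split => //=; apply: idealN => //; case: sq.
  rewrite big_cat big_map /= sumrN.
  have -> : x - y - (\sum_(pr <- l1) pr.2 + - \sum_(pr <- l2) pr.2)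
    = (x - \sum_(pr <- l1) pr.2) - (y - \sum_(pr <- l2) pr.2).
    by rewrite !opprB addrACA [RHS]addrACA addrC [- _ + _]addrC addrC.
  by apply: idealB.
- move=> x r [l [ok H]]; exists (map (fun pr => (pr.1, pr.2 * r)) l); split.
    move=> pr /(List.in_map_iff _ _ _) [q [<- /ok [sq tq]]].
    by split => //=; apply: idealM => //; case: sq.
  rewrite big_map -mulr_suml -mulrBl; exact: idealM.
Qed.

Lemma socle_sumS x : socle_succ S x -> sumS x.
Proof.
apply.
- exact: sumS_ideal.
- by move=> y Sy; exists [::]; split => //; rewrite big_nil subr0.
- move=> T sT y Ty; exists [:: (T, y)]; split.
    by move=> pr [<-|//].
  by rewrite big_seq1 subrr; apply: ideal0.
Qed.
End SumS.

Lemma zid (V : zmodType) (A B C D E : V) :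
  A - (B + C) = (A - (D + E)) - ((B - D) + (C - E)).
Proof.
rewrite -[in RHS]addrA; congr (_ + _).
rewrite -opprD; congr (- _).
by rewrite [B - D + _]addrACA -opprD [RHS]addrC subrK.
Qed.

Definition pp (R : pzRingType) (M : lmodType R^c) (n : nat) (v : 'I_n -> M)
  (x : {ffun 'I_n -> (R^c)^o}) : M := \sum_i (x i : R^c) *: v i.
Lemma pp_lin (R : pzRingType) (M : lmodType R^c) (n : nat) (v : 'I_n -> M) : linear (pp v).
Proof.
move=> a x y; rewrite /pp scaler_sumr -big_split; apply: eq_bigr => i _.
by rewrite !ffunE scalerDl scalerA.
Qed.
Definition ppL (R : pzRingType) (M : lmodType R^c) (n : nat) (v : 'I_n -> M) :
  {linear {ffun 'I_n -> (R^c)^o} -> M} :=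
  HB.pack (pp v) (GRing.isLinear.Build _ _ _ _ (pp v) (pp_lin v)).

Section Vec.
Variables (R : pzRingType) (M : lmodType R^c) (n : nat) (v : 'I_n -> M).
Local Notation F := {ffun 'I_n -> (R^c)^o}.
Local Notation pp := (ppL v).

Definition vin (S : R -> Prop) (x : F) := forall i, S (x i).

Definition ee (i : 'I_n) (t : R) : F := [ffun j => if j == i then (t : (R^c)^o) else 0].

Lemma ee_sum (x : F) : x = \sum_i ee i (x i).
Proof.
apply/ffunP => j; rewrite sum_ffunE (bigD1 j) //= ffunE eqxx big1 ?addr0 //.
by move=> i /negbTE nij; rewrite ffunE eq_sym nij.
Qed.
Lemma eeB i t1 t2 : ee i (t1 - t2) = ee i t1 - ee i t2.
Proof. by apply/ffunP => j; rewrite !ffunE; case: (j == i); rewrite ?subrr. Qed.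
Lemma eeD i t1 t2 : ee i (t1 + t2) = ee i t1 + ee i t2.
Proof. by apply/ffunP => j; rewrite !ffunE; case: (j == i); rewrite ?addr0. Qed.
Lemma ee0 i : ee i 0 = 0.
Proof. by apply/ffunP => j; rewrite !ffunE; case: (j == i). Qed.
Lemma eeM i t (r : R^c) : ee i ((t : R) * (r : R)) = r *: ee i t.
Proof.
apply/ffunP => j; rewrite !ffunE; case: (j == i) => //.
by rewrite scaler0.
Qed.

Section Ideal.
Variable (S : R -> Prop).
Hypothesis SI : right_ideal S.

Lemma vin0 : vin S 0. Proof. by move=> i; rewrite ffunE; exact: (ideal0 SI). Qed.
Lemma vinB x y : vin S x -> vin S y -> vin S (x - y).
Proof. by move=> Hx Hy i; rewrite !ffunE; exact: (idealB SI (Hx i) (Hy i)). Qed.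
Lemma vinD x y : vin S x -> vin S y -> vin S (x + y).
Proof. by move=> Hx Hy i; rewrite !ffunE; exact: (idealD SI (Hx i) (Hy i)). Qed.
Lemma vinZ (a : R^c) x : vin S x -> vin S (a *: x).
Proof. by move=> Hx i; rewrite !ffunE; exact: (idealM _ SI (Hx i)). Qed.
Lemma vin_ee i t : S t -> vin S (ee i t).
Proof. by move=> St j; rewrite ffunE; case: (j == i) => //; exact: (ideal0 SI). Qed.

Definition WM (m : M) := exists s, vin S s /\ m = pp s.
Lemma WM0 : WM 0. Proof. by exists 0; split; [apply: vin0 | rewrite linear0]. Qed.
Lemma WMB x y : WM x -> WM y -> WM (x - y).
Proof.
by move=> [s [Hs ->]] [t [Ht ->]]; exists (s - t); split; [apply: vinB | rewrite linearB].
Qed.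
Lemma WMZ a x : WM x -> WM (a *: x).
Proof.
by move=> [s [Hs ->]]; exists (a *: s); split; [apply: vinZ | rewrite linearZ].
Qed.
End Ideal.

Section Succ.
Variable S : R -> Prop.
Hypothesis SI : right_ideal S.
Local Notation S' := (socle_succ S).
Let S'I : right_ideal S' := g_ideal S.
Let SS' : subR S S' := g_infl (S:=S).

Definition Atom := ('I_n * (R -> Prop))%type.
Fixpoint Cp (J : seq Atom) (y : F) : Prop :=
  match J with
  | [::] => y = 0
  | a :: J' => exists t z, a.2 t /\ Cp J' z /\ y = ee a.1 t + z
  end.
Definition okJ (J : seq Atom) := forall a, List.In a J -> simple_over S a.2.

Lemma okJ_cons a J : okJ (a :: J) -> simple_over S a.2 /\ okJ J.
Proof. by move=> H; split; [apply: H; left | move=> b Hb; apply: H; right]. Qed.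
Lemma okJ_cat J1 J2 : okJ J1 -> okJ J2 -> okJ (J1 ++ J2).
Proof. by move=> H1 H2 a Ha; case: (List.in_app_or _ _ _ Ha) => [/H1|/H2]. Qed.
Lemma simple_ideal T : simple_over S T -> right_ideal T.
Proof. by case. Qed.

Lemma Cp0 J : okJ J -> Cp J 0.
Proof.
elim: J => [//|a J IH] /okJ_cons [sa okJ].
exists 0, 0; split; first exact: (ideal0 (simple_ideal sa)).
by split; [apply: IH | rewrite ee0 addr0].
Qed.
Lemma CpB J x y : okJ J -> Cp J x -> Cp J y -> Cp J (x - y).
Proof.
elim: J x y => [|a J IH] x y; first by move=> _ -> ->; rewrite subrr.
move=> /okJ_cons [sa okJ] [t1 [z1 [T1 [C1 ->]]]] [t2 [z2 [T2 [C2 ->]]]].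
exists (t1 - t2), (z1 - z2); split; first exact: (idealB (simple_ideal sa)).
by split; [apply: IH | rewrite eeB opprD addrACA].
Qed.
Lemma CpD J x y : okJ J -> Cp J x -> Cp J y -> Cp J (x + y).
Proof.
move=> ok Cx Cy; rewrite -[y]opprK -[- y]add0r.
by apply: CpB => //; apply: CpB => //; apply: Cp0.
Qed.
Lemma CpZ J (r : R^c) x : okJ J -> Cp J x -> Cp J (r *: x).
Proof.
elim: J x => [|a J IH] x; first by move=> _ ->; rewrite scaler0.
move=> /okJ_cons [sa okJ] [t [z [Tt [Cz ->]]]].
exists ((t : R) * (r : R)), (r *: z); split; first exact: (idealM _ (simple_ideal sa)).
by split; [apply: IH | rewrite scalerDr eeM].
Qed.
Lemma Cp_catl J1 J2 x : okJ J2 -> Cp J1 x -> Cp (J1 ++ J2) x.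
Proof.
move=> ok2; elim: J1 x => [|a J IH] x; first by move=> ->; apply: Cp0.
by move=> [t [z [Tt [Cz ->]]]]; exists t, z; split => //; split => //; apply: IH.
Qed.
Lemma Cp_catr J1 J2 x : okJ J1 -> Cp J2 x -> Cp (J1 ++ J2) x.
Proof.
elim: J1 => [//|a J IH] /okJ_cons [sa ok] Cx.
exists 0, x; split; first exact: (ideal0 (simple_ideal sa)).
by split; [apply: IH | rewrite ee0 add0r].
Qed.
Lemma Cp_vin J x : okJ J -> Cp J x -> vin S' x.
Proof.
elim: J x => [|a J IH] x; first by move=> _ ->; apply: vin0.
move=> /okJ_cons [sa ok] [t [z [Tt [Cz ->]]]].
apply: vinD => //; last by apply: IH.
by apply: vin_ee => //; apply: (simple_sub_g sa).
Qed.

Definition SpanJ J y := exists s c, vin S s /\ Cp J c /\ y = s + c.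
Definition Span y := exists J, okJ J /\ SpanJ J y.

Lemma SpanJD J x y : okJ J -> SpanJ J x -> SpanJ J y -> SpanJ J (x + y).
Proof.
move=> ok [s1 [c1 [H1 [C1 ->]]]] [s2 [c2 [H2 [C2 ->]]]].
exists (s1 + s2), (c1 + c2); split; first exact: vinD.
by split; [apply: CpD | rewrite addrACA].
Qed.
Lemma SpanJZ J (r : R^c) x : okJ J -> SpanJ J x -> SpanJ J (r *: x).
Proof.
move=> ok [s1 [c1 [H1 [C1 ->]]]].
exists (r *: s1), (r *: c1); split; first exact: vinZ.
by split; [apply: CpZ | rewrite scalerDr].
Qed.
Lemma SpanJ0 J : okJ J -> SpanJ J 0.
Proof. by move=> ok; exists 0, 0; split; [apply: vin0 | split; [apply: Cp0 | rewrite addr0]]. Qed.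
Lemma SpanJ_catl J1 J2 x : okJ J2 -> SpanJ J1 x -> SpanJ (J1 ++ J2) x.
Proof. by move=> ok [s [c [H [C ->]]]]; exists s, c; split => //; split => //; apply: Cp_catl. Qed.
Lemma SpanJ_catr J1 J2 x : okJ J1 -> SpanJ J2 x -> SpanJ (J1 ++ J2) x.
Proof. by move=> ok [s [c [H [C ->]]]]; exists s, c; split => //; split => //; apply: Cp_catr. Qed.
Lemma SpanD x y : Span x -> Span y -> Span (x + y).
Proof.
move=> [J1 [ok1 H1]] [J2 [ok2 H2]]; exists (J1 ++ J2); split; first exact: okJ_cat.
by apply: SpanJD; [apply: okJ_cat | apply: SpanJ_catl | apply: SpanJ_catr].
Qed.

Lemma Span_ee i t : S' t -> Span (ee i t).
Proof.
move=> /(socle_sumS SI) [l [okl Hl]].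
have [okm Cm] : okJ (map (fun pr => (i, pr.1)) l) /\
   Cp (map (fun pr => (i, pr.1)) l) (ee i (\sum_(pr <- l) pr.2)).
  elim: l okl {Hl} => [|pr l IH] okl; first by split => //; rewrite big_nil ee0.
  have [sp tp] := okl pr (or_introl erefl).
  have [ok' C'] := IH (fun q Hq => okl q (or_intror Hq)).
  split.
    by move=> a [<-|/ok'].
  by exists pr.2, (ee i (\sum_(pr <- l) pr.2)); rewrite big_cons eeD.
exists (map (fun pr => (i, pr.1)) l); split => //.
exists (ee i (t - \sum_(pr <- l) pr.2)), (ee i (\sum_(pr <- l) pr.2)).
split; first exact: vin_ee.
by split => //; rewrite -eeD subrK.
Qed.

Lemma Span_vec x : vin S' x -> Span x.
Proof.
move=> Hx; rewrite (ee_sum x); apply: big_ind.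
- by exists [::]; split => //; apply: SpanJ0.
- exact: SpanD.
- by move=> i _; apply: Span_ee.
Qed.

Lemma common k (xs : 'I_k -> F) : (forall j, Span (xs j)) ->
  exists J, okJ J /\ forall j, SpanJ J (xs j).
Proof.
move=> H.
have : forall s : seq 'I_k, exists J, okJ J /\ forall j, j \in s -> SpanJ J (xs j).
  elim=> [|j s [J [ok HJ]]]; first by exists [::]; split.
  have [J0 [ok0 H0]] := H j.
  exists (J0 ++ J); split; first exact: okJ_cat.
  move=> j'; rewrite in_cons => /orP [/eqP ->|/HJ Hj].
    exact: SpanJ_catl.
  exact: SpanJ_catr.
move=> /(_ (enum 'I_k)) [J [ok HJ]]; exists J; split => // j.
by apply: HJ; rewrite mem_enum.
Qed.

Definition Bp c := vin S' c /\ WM S (pp c).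
Lemma Bp0 : Bp 0. Proof. by split; [apply: vin0 | rewrite linear0; apply: WM0]. Qed.
Lemma BpB x y : Bp x -> Bp y -> Bp (x - y).
Proof.
move=> [H1 W1] [H2 W2]; split; first exact: vinB.
by rewrite linearB; apply: WMB.
Qed.
Lemma BpZ (r : R^c) x : Bp x -> Bp (r *: x).
Proof. by move=> [H1 W1]; split; [apply: vinZ | rewrite linearZ; apply: WMZ]. Qed.
Lemma Bp_vin x : vin S x -> Bp x.
Proof. by move=> Hx; split; [move=> i; apply: SS' | exists x]. Qed.

Definition indep J := forall c, Cp J c -> Bp c -> vin S c.
Definition BC J y := exists b c, Bp b /\ Cp J c /\ y = b + c.

Lemma BC0 J : okJ J -> BC J 0.
Proof. by move=> ok; exists 0, 0; split; [apply: Bp0 | split; [apply: Cp0 | rewrite addr0]]. Qed.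
Lemma BCB J x y : okJ J -> BC J x -> BC J y -> BC J (x - y).
Proof.
move=> ok [b1 [c1 [H1 [C1 ->]]]] [b2 [c2 [H2 [C2 ->]]]].
exists (b1 - b2), (c1 - c2); split; first exact: BpB.
by split; [apply: CpB | rewrite opprD addrACA].
Qed.
Lemma BCD J x y : okJ J -> BC J x -> BC J y -> BC J (x + y).
Proof.
move=> ok Cx Cy; rewrite -[y]opprK -[- y]add0r.
by apply: BCB => //; apply: BCB => //; apply: BC0.
Qed.
Lemma BCZ J (r : R^c) x : okJ J -> BC J x -> BC J (r *: x).
Proof.
move=> ok [b1 [c1 [H1 [C1 ->]]]].
exists (r *: b1), (r *: c1); split; first exact: BpZ.
by split; [apply: CpZ | rewrite scalerDr].
Qed.
Lemma BC_mono J0 J1 y : (forall c, Cp J0 c -> Cp J1 c) -> BC J0 y -> BC J1 y.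
Proof. by move=> H [b [c [Hb [Hc ->]]]]; exists b, c; split => //; split => //; apply: H. Qed.

Lemma indep_cons i T J0 t0 : okJ J0 -> simple_over S T -> indep J0 ->
  T t0 -> ~ BC J0 (ee i t0) -> indep ((i, T) :: J0).
Proof.
move=> ok0 sT ind0 Tt0 nBC.
have TI := simple_ideal sT.
pose U t := T t /\ BC J0 (ee i t).
have UI : right_ideal U.
  split.
  - by split; [apply: (ideal0 TI) | rewrite ee0; apply: BC0].
  - move=> x y [Tx Bx] [Ty By]; split; first exact: (idealB TI).
    by rewrite eeB; apply: BCB.
  - move=> x r [Tx Bx]; split; first exact: (idealM _ TI).
    by rewrite (eeM i x r); apply: BCZ.
have SU : subR S U.
  move=> s Ss; split; first by case: sT => _ ST _ _; apply: ST.
  exists (ee i s), 0; split; first by apply: Bp_vin; apply: vin_ee.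
  by split; [apply: Cp0 | rewrite addr0].
have US : subR U S.
  case: sT => _ _ _ /(_ U UI SU (fun x Ux => Ux.1)) [//|TU].
  by exfalso; apply: nBC; case: (TU t0 Tt0).
move=> c [t [z [/= Tt [Cz ->]]]] Bc.
have St : S t.
  apply: US; split => //.
  exists (ee i t + z), (- z); split => //; split; last by rewrite addrK.
  by rewrite -sub0r; apply: CpB => //; apply: Cp0.
have Bz : Bp z.
  have -> : z = ee i t + z - ee i t by rewrite addrC addKr.
  by apply: BpB => //; apply: Bp_vin; apply: vin_ee.
by apply: vinD => //; [apply: vin_ee | apply: ind0].
Qed.

Lemma greedy J : okJ J -> forall J0, okJ J0 -> indep J0 ->
  exists J1, [/\ okJ J1, indep J1, (forall c, Cp J0 c -> Cp J1 c) &
    (forall c, Cp J c -> BC J1 c)].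
Proof.
elim: J => [|[i T] J IH] okJJ J0 ok0 ind0.
  by exists J0; split => // c /= ->; apply: BC0.
have [sT okJ'] := okJ_cons okJJ.
case: (pselect (forall t, T t -> BC J0 (ee i t))) => [Hall|Hn].
  have [J1 [ok1 ind1 mono1 cov1]] := IH okJ' J0 ok0 ind0.
  exists J1; split => // c [t [z [/= Tt [Cz ->]]]].
  apply: BCD => //; last by apply: cov1.
  by apply: (BC_mono mono1); apply: Hall.
have [t0 Ht0] : exists t0, ~ (T t0 -> BC J0 (ee i t0)).
  by apply/existsNP.
have Tt0 : T t0 by apply: contrapT => nT; apply: Ht0.
have nB : ~ BC J0 (ee i t0) by move=> HB; apply: Ht0.
have ok0' : okJ ((i, T) :: J0) by move=> a [<-|/ok0].
have ind0' := indep_cons ok0 sT ind0 Tt0 nB.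
have [J1 [ok1 ind1 mono1 cov1]] := IH okJ' _ ok0' ind0'.
exists J1; split => //.
  move=> c Cc; apply: mono1; exists 0, c; split; first exact: (ideal0 (simple_ideal sT)).
  by split => //; rewrite ee0 add0r.
move=> c [t [z [/= Tt [Cz ->]]]].
apply: BCD => //; last by apply: cov1.
exists 0, (ee i t); split; first exact: Bp0.
split; last by rewrite add0r.
apply: mono1; exists t, 0; split => //; split; [exact: Cp0 | by rewrite addr0].
Qed.

Lemma WMD x y : WM S x -> WM S y -> WM S (x + y).
Proof.
move=> Hx Hy; rewrite -[y]opprK -[- y]add0r.
by apply: WMB => //; apply: WMB => //; apply: WM0.
Qed.

Hypothesis vgen : forall m : M, exists c : 'I_n -> R^c, m = \sum_i c i *: v i.

Lemma SSL (f : M -> M) : linear f ->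
  (forall m, exists x, vin S' x /\ pp x = f m) ->
  exists psi : M -> F, [/\ forall m, vin S' (psi m),
     forall m, WM S (pp (psi m) - f m) &
     forall a m1 m2, vin S (psi (a *: m1 + m2) - (a *: psi m1 + psi m2))].
Proof.
move=> Hf hf.
pose fL : {linear M -> M} := HB.pack f (GRing.isLinear.Build _ _ _ _ f Hf).
have fE : forall m, f m = fL m by [].
have : forall k : 'I_n, exists x, vin S' x /\ pp x = f (v k) by move=> k; apply: hf.
move/choice => [xk Hxk].
have [J [okJJ HJ]] := common (fun k => Span_vec (Hxk k).1).
have ok0 : okJ [::] by [].
have ind0 : indep [::] by move=> c /= -> _; apply: vin0.
have [J1 [ok1 ind1 _ cov1]] := greedy okJJ ok0 ind0.
have Hm : forall m, exists c, Cp J1 c /\ WM S (pp c - f m).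
  move=> m; have [cs Ecs] := vgen m.
  pose X := \sum_k cs k *: xk k.
  have fX : f m = pp X.
    rewrite Ecs fE linear_sum /X linear_sum; apply: eq_bigr => k _.
    by rewrite !linearZZ (Hxk k).2.
  have SX : SpanJ J X.
    apply: big_ind; [exact: (SpanJ0 okJJ) | by move=> x y; apply: SpanJD | ].
    by move=> k _; apply: SpanJZ.
  have BX : BC J1 X.
    case: SX => [s [c [Hs [Hc ->]]]].
    apply: BCD => //; last by apply: cov1.
    exists s, 0; split; first exact: Bp_vin.
    by split; [apply: Cp0 | rewrite addr0].
  case: BX => [b [c [Bb [Cc EX]]]]; exists c; split => //.
  have -> : pp c - f m = 0 - pp b.
    by rewrite fX EX linearD opprD addrCA subrr addr0 sub0r.
  by apply: WMB => //; [apply: WM0 | case: Bb].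
have [psi Hpsi] := choice Hm.
exists psi; split.
- by move=> m; apply: (Cp_vin ok1 (Hpsi m).1).
- by move=> m; apply: (Hpsi m).2.
- move=> a m1 m2; apply: ind1.
    apply: CpB => //; last apply: CpD => //; first apply: (Hpsi _).1.
      by apply: CpZ => //; apply: (Hpsi _).1.
    by apply: (Hpsi _).1.
  split.
    have C m := Cp_vin ok1 (Hpsi m).1.
    exact: (vinB S'I (C _) (vinD S'I (vinZ S'I a (C _)) (C _))).
  rewrite linearB linearD linearZZ /=.
  rewrite (zid _ _ _ (a *: f m1) (f m2)).
  have -> : a *: f m1 + f m2 = f (a *: m1 + m2) by rewrite Hf.
  rewrite -scalerBr; apply: WMB => //; first by apply: (Hpsi _).2.
  exact: (WMD (WMZ SI a (Hpsi m1).2) (Hpsi m2).2).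
Qed.

End Succ.
End Vec.

Lemma fin_member (R : pzRingType) (I : finType) (Fam : (R -> Prop) -> Prop)
  (neF : exists S, Fam S) (sF : forall S, Fam S -> socle_stage S) (y : I -> R) :
  (forall i, exists2 S, Fam S & S (y i)) -> exists C, Fam C /\ forall i, C (y i).
Proof.
move=> H.
suff : forall s : seq I, exists C, Fam C /\ forall i, i \in s -> C (y i).
  by move/(_ (enum I)) => [C [FC HC]]; exists C; split => // i; apply: HC; rewrite mem_enum.
elim=> [|j s [C [FC HC]]].
  by case: neF => S FS; exists S; split.
case: (H j) => C' FC' C'j.
case: (chain (sF C FC) (sF C' FC')) => Hsub.
  exists C'; split => // i; rewrite in_cons => /orP [/eqP ->//|/HC]; apply: Hsub.
exists C; split => // i; rewrite in_cons => /orP [/eqP ->|/HC//]; by apply: Hsub.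
Qed.

Section Main.
Variables (R : pzRingType) (M : lmodType R^c) (n : nat) (v : 'I_n -> M).
Hypothesis vgen : forall m : M, exists c : 'I_n -> R^c, m = \sum_i c i *: v i.
Hypothesis hw : weakly_projective M.
Local Notation F := {ffun 'I_n -> (R^c)^o}.
Local Notation pp := (ppL v).

Definition Qst (S : R -> Prop) := forall f : M -> M, linear f ->
  (forall m, exists x, vin S x /\ pp x = f m) ->
  exists g : M -> F, [/\ linear g, forall m, vin S (g m) & forall m, pp (g m) = f m].


Lemma succ_step S0 : socle_stage S0 -> Qst S0 -> Qst (socle_succ S0).
Proof.
move=> sS0 IH f Hf hf.
have SI := stage_ideal sS0.
have S'I := g_ideal S0.
have SS' : subR S0 (socle_succ S0) := g_infl (S:=S0).
pose fL : {linear M -> M} := HB.pack f (GRing.isLinear.Build _ _ _ _ f Hf).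
have [psi [psiS' psiW psiL]] := SSL SI vgen Hf hf.
case: (pselect (forall x, S0 x)) => [Sall|Snall].
  have [g [Hg Sg pg]] : exists g : M -> F, [/\ linear g, forall m, vin S0 (g m) & forall m, pp (g m) = f m].
    by apply: IH => // m; have [x [_ Hx]] := hf m; exists x; split => // i; apply: Sall.
  by exists g; split => // m i; apply: SS'; apply: Sg.
case: (pselect (forall x, S0 x -> x = 0)) => [Szero|Snz].
  have vz (x : F) : vin S0 x -> x = 0 by move=> Hx; apply/ffunP => i; rewrite ffunE; apply: Szero.
  exists psi; split => //.
    by move=> a m1 m2; apply/eqP; rewrite -subr_eq0; apply/eqP; apply: vz.
  move=> m; have [s [Hs Es]] := psiW m; move: Es; rewrite (vz _ Hs) linear0.
  by move/eqP; rewrite subr_eq0 => /eqP.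
have ex0 : exists x, S0 x /\ x != 0.
  have [x Hx] : exists x, ~ (S0 x -> x = 0) by apply/existsNP.
  exists x; split; first by apply: contrapT => nS; apply: Hx.
  by apply/eqP => x0; apply: Hx.
have exn : exists x, ~ S0 x by apply/existsNP.
have [P [iota [inj Hiota]]] := @sub_exists (R^c) ((R^c)^o) (socle_succ S0)
  (ideal0 S'I) (fun x y => idealB S'I) (fun a x Hx => idealM _ S'I Hx).
have W0 : S0 (iota 0) by rewrite linear0; apply: (ideal0 SI).
have WB : forall x y, S0 (iota x) -> S0 (iota y) -> S0 (iota (x - y)).
  by move=> x y Hx Hy; rewrite linearB; apply: (idealB SI).
have WZ : forall a x, S0 (iota x) -> S0 (iota (a *: x)).
  by move=> a x Hx; rewrite linearZZ; apply: (idealM _ SI).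
have [L [pi [surj Hker]]] := @quot_exists (R^c) P (fun p => S0 (iota p)) W0 WB WZ.
have : forall mi : M * 'I_n, exists q, iota q = psi mi.1 mi.2.
  by move=> mi; apply/Hiota; apply: psiS'.
move/choice => [pre Hpre].
pose phi (i : 'I_n) (m : M) : L := pi (pre (m, i)).
have phiL i : linear (phi i).
  move=> a m1 m2; rewrite /phi; apply/eqP; rewrite -subr_eq0 -linearZZ -linearD -linearB.
  apply/eqP; apply/Hker; rewrite linearB linearD linearZZ !Hpre /=.
  have := psiL a m1 m2 i; by rewrite !ffunE.
have : forall i : 'I_n, exists g1 : {linear M -> P}, forall m, pi (g1 m) = phi i m.
  move=> i.
  pose phL : {linear M -> L} := HB.pack (phi i) (GRing.isLinear.Build _ _ _ _ (phi i) (phiL i)).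
  have := hw sS0 ex0 exn inj Hiota surj Hker (f := phL).
  apply.
  exists n, v => m; have [cs ->] := vgen m; exists cs.
  rewrite linear_sum; apply: eq_bigr => k _; by rewrite linearZZ.
move/choice => [G HG].
pose g' (m : M) : F := [ffun i => iota (G i m)].
have g'L : linear g'.
  by move=> a m1 m2; apply/ffunP => i; rewrite !ffunE !linearP.
have g'S' m : vin (socle_succ S0) (g' m).
  by move=> i; rewrite ffunE; apply/Hiota; exists (G i m).
have g'd m : vin S0 (g' m - psi m).
  move=> i; rewrite !ffunE -(Hpre (m, i)) /= -linearB; apply/Hker.
  by rewrite linearB HG subrr.
pose f' m := f m - pp (g' m).
have f'L : linear f'.
  move=> a m1 m2; rewrite /f' Hf g'L linearD linearZZ.
  by rewrite scalerBr opprD addrACA.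
have hf' : forall m, exists x, vin S0 x /\ pp x = f' m.
  move=> m.
  have : WM v S0 (0 - ((pp (psi m) - f m) + pp (g' m - psi m))).
    apply: WMB => //; first exact: WM0.
    apply: (WMD SI (psiW m)).
    by exists (g' m - psi m); split => //; apply: g'd.
  have -> : 0 - ((pp (psi m) - f m) + pp (g' m - psi m)) = f' m.
    by rewrite /f' linearB sub0r addrC addrA subrK opprB.
  by move=> [s [Hs Es]]; exists s; split.
have [g'' [Hg'' Sg'' pg'']] := IH f' f'L hf'.
exists (fun m => g' m + g'' m); split.
- move=> a m1 m2; rewrite g'L Hg''.
  by rewrite scalerDr addrACA.
- move=> m; apply: (vinD S'I (g'S' m)).
  by move=> i; apply: SS'; apply: Sg''.
- by move=> m; rewrite linearD pg'' /f' addrC subrK.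
Qed.

Lemma main S : socle_stage S -> Qst S.
Proof.
elim=> [|S0 sS0 IH|Fam neF sF IH].
- move=> f Hf hf; exists (fun _ => 0); split.
  + by move=> a x y; rewrite scaler0 addr0.
  + by move=> m i; rewrite ffunE.
  + move=> m; have [x [Hx <-]] := hf m.
    have -> : x = 0 by apply/ffunP => i; rewrite ffunE; apply: Hx.
    by rewrite linear0.
- exact: succ_step.
- move=> f Hf hf.
  have : forall k : 'I_n, exists x, vin (fun x => exists2 S, Fam S & S x) x /\ pp x = f (v k).
    by move=> k; apply: hf.
  move/choice => [xk Hxk].
  have [C [FC HC]] := fin_member neF sF (y := fun ki : 'I_n * 'I_n => xk ki.1 ki.2)
    (fun ki => (Hxk ki.1).1 ki.2).
  have CI := stage_ideal (sF C FC).
  have [g [Hg Cg pg]] : exists g : M -> F, [/\ linear g, forall m, vin C (g m) & forall m, pp (g m) = f m].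
    apply: (IH C FC) => // m.
    pose fL : {linear M -> M} := HB.pack f (GRing.isLinear.Build _ _ _ _ f Hf).
    have [cs ->] := vgen m.
    exists (\sum_k cs k *: xk k); split.
      apply: big_ind; [exact: (vin0 CI) | by move=> x y; apply: vinD |].
      by move=> k _; apply: vinZ => // i; apply: (HC (k, i)).
    have -> : f (\sum_i cs i *: v i) = fL (\sum_i cs i *: v i) by [].
    rewrite !linear_sum; apply: eq_bigr => k _.
    by rewrite !linearZZ (Hxk k).2.
  exists g; split => // m i; exists C => //; apply: Cg.
Qed.
End Main.

Unset Implicit Arguments.

Theorem corollary1p6 (R : pzRingType) (M : lmodType R^c) :
  right_semiartinian R -> ~ completely_reducible R ->
  fin_gen M -> weakly_projective M -> projective M.
Proof.
move=> [Sf sSf Sall] _ [n [v vgen]] hw N N' h hsurj f.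
have [s [Hs _ ps]] : exists s : M -> {ffun 'I_n -> (R^c)^o},
    [/\ linear s, forall m, vin Sf (s m) & forall m, ppL v (s m) = id m].
  apply: (main vgen hw sSf) => //.
  move=> m; have [c Ec] := vgen m.
  exists [ffun i => (c i : (R^c)^o)]; split => //.
  by rewrite Ec /= /pp; apply: eq_bigr => i _; rewrite ffunE.
have : forall k : 'I_n, exists y, h y = f (v k) by move=> k; apply: hsurj.
move/choice => [yk Hyk].
pose g (m : M) : N := \sum_k (s m k : R^c) *: yk k.
have gL : linear g.
  move=> a m1 m2; rewrite /g Hs scaler_sumr -big_split; apply: eq_bigr => k _.
  by rewrite !ffunE scalerDl scalerA.
pose gP : {linear M -> N} := HB.pack g (GRing.isLinear.Build _ _ _ _ g gL).
exists gP => m.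
have -> : h (gP m) = h (g m) by [].
rewrite /g linear_sum.
have -> : \sum_(k < n) h ((s m k : R^c) *: yk k) = f (ppL v (s m)).
  rewrite /= /pp linear_sum; apply: eq_bigr => k _.
  by rewrite !linearZZ Hyk.
by rewrite ps.
Qed.
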